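(* For every $\tau\in\Gamma_S^\infty$, every integer $R\ge1$ and every $x\in(0,1]$, $$P_\tau(x)\;\ge\;1-\frac1R-x\,|\bar{\mathcal B}_R|.$$
   Context: $\Gamma$ is the set of planar rooted, locally finite trees whose root $r$ has degree one; $\Gamma_S^\infty\subset\Gamma$ is the set of infinite trees with exactly one infinite non-backtracking path from $r$ (the spine), with spine vertices $s_1,s_2,\dots$ ordered away from $r$ (set $s_0=r$). $|G|$ is the number of edges of a graph $G$. For $i\ge1$, $\mathcal A^i$ is the component containing $s_i$ after deleting the spine edges $\{s_{i-1},s_i\},\{s_i,s_{i+1}\}$; the hull $\bar{\mathcal B}_R$ is the union of the spine path from $r$ to $s_R$ and $\mathcal A^1,\dots,\mathcal A^R$, so $|\bar{\mathcal B}_R|=R+\sum_{i=1}^R|\mathcal A^i|$. For simple random walk $\omega$ on $\tau$ started at $r$, $P_\tau(x)=\sum_{t\ge1}\mathbb P(\omega(t)=r,\ \omega(t')\ne r\text{ for }0<t'<t\mid \omega(0)=r)(1-x)^{t/2}$ is the generating function of first-return probabilities to the root. *)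

(* Defs.v *)
From Stdlib Require Import Reals List Lia.
Import ListNotations.
Open Scope R_scope.

(* Planar rooted locally finite trees, Ulam-Harris encoding.               *)
(* A tree is given by  ch : list nat -> nat,  the number of children of     *)
(* each vertex.  Vertices are lists of child indices written from the       *)
(* vertex back to the root (head = last step): the root r is [], the        *)
(* children of v are  i :: v  for i < ch v (ordered by i: planar order),    *)
(* and the parent of  i :: v  is  v.  Only lists reachable in this way are  *)
(* vertices of the tree; the walk below never leaves them.                  *)

Definition Tree := list nat -> nat.

Definition children (ch : Tree) (v : list nat) : list (list nat) :=
  map (fun i => i :: v) (seq 0 (ch v)).

Definition nbrs (ch : Tree) (v : list nat) : list (list nat) :=
  children ch v ++ match v with [] => [] | _ :: p => [p] end.

Definition deg (ch : Tree) (v : list nat) : nat :=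
  ch v + match v with [] => 0%nat | _ => 1%nat end.

Definition root_deg_one (ch : Tree) : Prop := deg ch [] = 1%nat.

(* An infinite non-backtracking path from r is a sequence of child choices  *)
(* s : nat -> nat; its n-th vertex is ray s n.                              *)
Fixpoint ray (s : nat -> nat) (n : nat) : list nat :=
  match n with
  | O => []
  | S m => s m :: ray s m
  end.

Definition is_ray (ch : Tree) (s : nat -> nat) : Prop :=
  forall n, (s n < ch (ray s n))%nat.

(* tau in Gamma_S^infty with spine sp: root of degree one, sp is an infinite *)
(* non-backtracking path from r, and it is the only one.                    *)
Definition spine_of (ch : Tree) (sp : nat -> nat) : Prop :=
  root_deg_one ch /\ is_ray ch sp /\
  (forall s', is_ray ch s' -> forall n, s' n = sp n).

(* Hull  bar B_R: the spine path r..s_R together with A^1,...,A^R, i.e.     *)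
(* all vertices except those in the subtree rooted at s_{R+1}.  It is a     *)
(* subtree, so |bar B_R| = (#vertices) - 1 = R + sum_i |A^i|.               *)

Fixpoint level (ch : Tree) (n : nat) : list (list nat) :=
  match n with
  | O => [ [] ]
  | S m => flat_map (children ch) (level ch m)
  end.

Definition in_subtree (v w : list nat) : bool :=
  if Nat.leb (length v) (length w) then
    if list_eq_dec Nat.eq_dec (skipn (length w - length v) w) v then true else false
  else false.

Definition in_hull (sp : nat -> nat) (Rr : nat) (w : list nat) : bool :=
  negb (in_subtree (ray sp (S Rr)) w).

Fixpoint hull_vertices_upto (ch : Tree) (sp : nat -> nat) (Rr d : nat) : nat :=
  match d with
  | O => length (filter (in_hull sp Rr) (level ch 0))
  | S e => (hull_vertices_upto ch sp Rr e
            + length (filter (in_hull sp Rr) (level ch (S e))))%nat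
  end.

(* |bar B_R| = N : the (eventually constant) number of vertices of the hull *)
(* minus one, i.e. its number of edges.                                     *)
Definition hull_edges_eq (ch : Tree) (sp : nat -> nat) (Rr N : nat) : Prop :=
  exists d0, forall d, (d0 <= d)%nat -> hull_vertices_upto ch sp Rr d = S N.

(* hit ch n u = P(walk started at u is at r at time n and not before).      *)

Definition sumR (l : list R) : R := fold_right Rplus 0 l.

Fixpoint hit (ch : Tree) (n : nat) (u : list nat) : R :=
  match n with
  | O => match u with [] => 1 | _ => 0 end
  | S m => match u with
           | [] => 0
           | _ => sumR (map (fun w => hit ch m w / INR (deg ch u)) (nbrs ch u))
           end
  end.

(* first return probability to r at time t (t >= 1), 0 for t = 0 *)
Definition first_return (ch : Tree) (t : nat) : R :=
  match t with
  | O => 0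
  | S m => sumR (map (fun w => hit ch m w / INR (deg ch [])) (nbrs ch []))
  end.

(* t-th term of P_tau(x) = sum_{t>=1} first_return t * (1-x)^(t/2) *)
Definition P_term (ch : Tree) (x : R) (t : nat) : R :=
  first_return ch t * (sqrt (1 - x)) ^ t.

(* Main.v *)
Require Import Defs.
From Stdlib Require Import Reals List.
From Stdlib Require Import Lia Lra.
Import ListNotations.
Open Scope R_scope.


Lemma sumR_app l1 l2 : sumR (l1 ++ l2) = sumR l1 + sumR l2.
Proof. induction l1; simpl; [lra|rewrite IHl1; lra]. Qed.

Lemma sumR_map_plus {A} (f g : A -> R) l :
  sumR (map (fun w => f w + g w) l) = sumR (map f l) + sumR (map g l).
Proof. induction l; simpl; [lra|rewrite IHl; lra]. Qed.

Lemma sumR_map_scal {A} c (f : A -> R) l :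
  sumR (map (fun w => c * f w) l) = c * sumR (map f l).
Proof. induction l; simpl; [lra|rewrite IHl; lra]. Qed.

Lemma sumR_map_div {A} (f : A -> R) d l :
  sumR (map (fun w => f w / d) l) = sumR (map f l) / d.
Proof. induction l; simpl; unfold Rdiv in *; [lra|rewrite IHl; lra]. Qed.

Lemma sumR_map_le {A} (f g : A -> R) l :
  (forall w, In w l -> f w <= g w) -> sumR (map f l) <= sumR (map g l).
Proof.
  induction l; simpl; intros H; [lra|].
  pose proof (H a (or_introl eq_refl)). pose proof (IHl (fun w h => H w (or_intror h))). lra.
Qed.

Lemma sumR_map_const {A} c (l : list A) :
  sumR (map (fun _ => c) l) = INR (length l) * c.
Proof. induction l; simpl length; rewrite ?S_INR; simpl; [lra|rewrite IHl; lra]. Qed.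

Lemma sumR_map_ext {A} (f g : A -> R) l :
  (forall w, In w l -> f w = g w) -> sumR (map f l) = sumR (map g l).
Proof.
  induction l; simpl; intros H; [lra|].
  rewrite (H a (or_introl eq_refl)), (IHl (fun w h => H w (or_intror h))); lra.
Qed.

Lemma sumR_map_nz {A} (f : A -> R) l :
  sumR (map f l) <> 0 -> exists w, In w l /\ f w <> 0.
Proof.
  induction l; simpl; intros H; [lra|].
  destruct (Req_dec (f a) 0) as [E|E].
  - destruct IHl as [w [Hw Hf]]; [rewrite E in H; lra|]. eauto.
  - eauto.
Qed.

Fixpoint sumto (f : nat -> R) (n : nat) : R :=
  match n with O => 0 | S k => sumto f k + f k end.

Lemma sumto_shift f n : sumto f (S n) = f O + sumto (fun m => f (S m)) n.
Proof. induction n; simpl in *; [lra|]. rewrite IHn; lra. Qed.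

Lemma sumto_map {A} (F : nat -> A -> R) l n :
  sumto (fun m => sumR (map (F m) l)) n = sumR (map (fun w => sumto (fun m => F m w) n) l).
Proof.
  induction n; simpl.
  - induction l; simpl; [lra|rewrite <- IHl; lra].
  - rewrite IHn. rewrite <- sumR_map_plus. reflexivity.
Qed.

Lemma sumto_ext f g n : (forall m, (m < n)%nat -> f m = g m) -> sumto f n = sumto g n.
Proof. induction n; simpl; intros H; [lra|]. rewrite IHn, H; [lra|lia|intros; apply H; lia]. Qed.

Lemma sumto_le f g n : (forall m, (m < n)%nat -> f m <= g m) -> sumto f n <= sumto g n.
Proof. induction n; simpl; intros H; [lra|]. pose proof (H n ltac:(lia)).
  pose proof (IHn ltac:(intros; apply H; lia)). lra. Qed.

Lemma sum_f_R0_sumto f n : sum_f_R0 f n = sumto f (S n).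
Proof. induction n; simpl in *; [lra|]. rewrite IHn. reflexivity. Qed.

(* spine depth *)
Fixpoint sd (sp : nat -> nat) (u : list nat) : nat :=
  match u with
  | [] => O
  | i :: v => if andb (Nat.eqb (sd sp v) (length v)) (Nat.eqb i (sp (length v)))
              then S (length v) else sd sp v
  end.

Lemma sd_le sp u : (sd sp u <= length u)%nat.
Proof. induction u; simpl; [lia|]. destruct andb; lia. Qed.

Lemma ray_len sp k : length (ray sp k) = k.
Proof. induction k; simpl; lia. Qed.

Lemma sd_ray sp k : sd sp (ray sp k) = k.
Proof. induction k; simpl; auto. rewrite ray_len, IHk, !Nat.eqb_refl. reflexivity. Qed.

Lemma sd_full sp v : sd sp v = length v -> v = ray sp (length v).
Proof.
  induction v; simpl; auto. intro H.
  destruct (Nat.eqb_spec (sd sp v) (length v)); destruct (Nat.eqb_spec a (sp (length v))); simpl in H;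
  try (pose proof (sd_le sp v); lia).
  subst. rewrite <- IHv; auto.
Qed.

Lemma sd_mono sp i v : (sd sp v <= sd sp (i :: v))%nat.
Proof. simpl. pose proof (sd_le sp v). destruct andb; lia. Qed.

Lemma in_subtree_cons a i v :
  in_subtree a (i :: v) = orb (if list_eq_dec Nat.eq_dec (i :: v) a then true else false) (in_subtree a v).
Proof.
  unfold in_subtree. simpl length.
  destruct (Nat.leb_spec (length a) (S (length v))).
  - destruct (Nat.eq_dec (length a) (S (length v))) as [E|E].
    + rewrite E, Nat.sub_diag. simpl skipn.
      destruct (Nat.leb_spec (S (length v)) (length v)); [lia|].
      destruct list_eq_dec; simpl; auto.
    + replace (S (length v) - length a)%nat with (S (length v - length a)) by lia. simpl skipn.
      destruct (Nat.leb_spec (length a) (length v)); [|lia].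
      destruct (list_eq_dec Nat.eq_dec (i :: v) a) as [E2|E2].
      { subst a. simpl in E. lia. } simpl. reflexivity.
  - destruct (Nat.leb_spec (length a) (length v)); [lia|].
    destruct (list_eq_dec Nat.eq_dec (i :: v) a) as [E2|E2]; [subst; simpl in *; lia|]. reflexivity.
Qed.

Lemma in_subtree_nil a : in_subtree a [] = match a with [] => true | _ => false end.
Proof. unfold in_subtree. destruct a; simpl; reflexivity. Qed.

Lemma in_subtree_sd sp R u : in_subtree (ray sp (S R)) u = Nat.leb (S R) (sd sp u).
Proof.
  induction u as [|i v IH].
  - rewrite in_subtree_nil. simpl. reflexivity.
  - rewrite in_subtree_cons, IH.
    pose proof (sd_le sp v).
    assert (Hs : sd sp (i :: v) = if andb (Nat.eqb (sd sp v) (length v)) (Nat.eqb i (sp (length v)))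
              then S (length v) else sd sp v) by reflexivity.
    rewrite Hs; clear Hs.
    destruct (list_eq_dec Nat.eq_dec (i :: v) (ray sp (S R))) as [E|E].
    + assert (length (i::v) = length (ray sp (S R))) as HL by (rewrite E; reflexivity).
      rewrite ray_len in HL. simpl in HL. simpl in E. injection E as E2 E3.
      rewrite E3 in *. rewrite sd_ray, ray_len, !Nat.eqb_refl. simpl andb.
      rewrite Bool.orb_true_l. symmetry. apply Nat.leb_le. rewrite E2, Nat.eqb_refl. lia.
    + rewrite Bool.orb_false_l.
      destruct (Nat.eqb_spec (sd sp v) (length v)) as [E1|E1];
      destruct (Nat.eqb_spec i (sp (length v))) as [E2|E2]; simpl andb; auto.
      pose proof (sd_full sp v E1) as Hv.
      destruct (Nat.leb_spec (S R) (sd sp v)); destruct (Nat.leb_spec (S R) (S (length v))); auto; try lia.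
      exfalso. apply E. assert (length v = R) by lia. subst i. rewrite H2. simpl. f_equal. rewrite Hv, H2. reflexivity.
Qed.

Lemma in_hull_sd sp R u : in_hull sp R u = Nat.leb (sd sp u) R.
Proof.
  unfold in_hull. rewrite in_subtree_sd.
  destruct (Nat.leb_spec (S R) (sd sp u)); destruct (Nat.leb_spec (sd sp u) R); simpl; auto; lia.
Qed.


Definition avg (ch : Tree) (g : list nat -> R) (u : list nat) : R :=
  sumR (map (fun w => g w / INR (deg ch u)) (nbrs ch u)).

Definition alive (sp : nat -> nat) (Rr : nat) (u : list nat) : bool :=
  match u with [] => false | _ => Nat.leb (sd sp u) Rr end.

Lemma nbrs_cons ch i p : nbrs ch (i :: p) = children ch (i :: p) ++ [p].
Proof. reflexivity. Qed.

Lemma deg_cons ch i p : deg ch (i :: p) = S (ch (i :: p)).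
Proof. unfold deg. lia. Qed.

Lemma len_nbrs ch i p : length (nbrs ch (i :: p)) = deg ch (i :: p).
Proof. rewrite nbrs_cons, deg_cons, length_app. unfold children. rewrite length_map, length_seq. simpl. lia. Qed.

Lemma deg_pos ch i p : 0 < INR (deg ch (i :: p)).
Proof. rewrite deg_cons. apply lt_0_INR. lia. Qed.

Lemma avg_eq ch g u : avg ch g u = sumR (map g (nbrs ch u)) / INR (deg ch u).
Proof. unfold avg. apply sumR_map_div. Qed.

Lemma avg_le ch g h i p :
  (forall w, In w (nbrs ch (i :: p)) -> g w <= h w) -> avg ch g (i :: p) <= avg ch h (i :: p).
Proof.
  intros H. rewrite !avg_eq. unfold Rdiv. apply Rmult_le_compat_r.
  - left. apply Rinv_0_lt_compat, deg_pos.
  - apply sumR_map_le; auto.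
Qed.

Lemma avg_const ch c i p : avg ch (fun _ => c) (i :: p) = c.
Proof.
  rewrite avg_eq, sumR_map_const, len_nbrs. pose proof (deg_pos ch i p). field. lra.
Qed.

Lemma avg_plus ch f g u : avg ch (fun w => f w + g w) u = avg ch f u + avg ch g u.
Proof. rewrite !avg_eq, sumR_map_plus. unfold Rdiv. lra. Qed.

Lemma avg_scal ch c f u : avg ch (fun w => c * f w) u = c * avg ch f u.
Proof. rewrite !avg_eq, sumR_map_scal. unfold Rdiv. lra. Qed.

Lemma sumto_div f d n : sumto (fun m => f m / d) n = sumto f n / d.
Proof. induction n; simpl; unfold Rdiv in *; [lra|]. rewrite IHn. lra. Qed.

Lemma sumto_avg ch (F : nat -> list nat -> R) u n :
  sumto (fun m => avg ch (F m) u) n = avg ch (fun w => sumto (fun m => F m w) n) u.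
Proof.
  unfold avg. rewrite (sumto_map (fun m w => F m w / INR (deg ch u))).
  apply sumR_map_ext. intros w _. apply sumto_div.
Qed.

Lemma sumto_zero n : sumto (fun _ => 0) n = 0.
Proof. induction n; simpl; lra. Qed.

Lemma hit_nonneg ch n u : 0 <= hit ch n u.
Proof.
  revert u; induction n; intros u; destruct u; simpl; try lra.
  replace 0 with (sumR (map (fun _ => 0) (nbrs ch (n0 :: u)))) by (rewrite sumR_map_const; lra).
  apply sumR_map_le. intros w _. unfold Rdiv. apply Rmult_le_pos; auto.
  left. apply Rinv_0_lt_compat, deg_pos.
Qed.

Fixpoint hK ch sp Rr n u : R :=
  match n with
  | O => match u with [] => 1 | _ => 0 end
  | S m => if alive sp Rr u then avg ch (hK ch sp Rr m) u else 0
  end.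

Lemma hK_nonneg ch sp Rr n u : 0 <= hK ch sp Rr n u.
Proof.
  revert u; induction n; intros u; simpl.
  - destruct u; lra.
  - destruct (alive sp Rr u) eqn:A; [|lra]. destruct u; [discriminate|].
    rewrite <- (avg_const ch 0 n0 u). apply avg_le. auto.
Qed.

Lemma hK_le_hit ch sp Rr n u : hK ch sp Rr n u <= hit ch n u.
Proof.
  revert u; induction n; intros u; simpl.
  - destruct u; lra.
  - destruct (alive sp Rr u) eqn:A; [|destruct u; [lra| exact (hit_nonneg ch (S n) (n0 :: u))]].
    destruct u; [discriminate|]. apply (avg_le ch _ (hit ch n)). auto.
Qed.

Lemma hK_parity ch sp Rr n u : hK ch sp Rr n u <> 0 -> Nat.even (n + length u) = true.
Proof.
  revert u; induction n; intros u H; simpl in H.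
  - destruct u; [reflexivity|lra].
  - destruct (alive sp Rr u) eqn:A; [|lra]. destruct u as [|i p]; [discriminate|].
    rewrite avg_eq in H. unfold Rdiv in H.
    assert (sumR (map (hK ch sp Rr n) (nbrs ch (i :: p))) <> 0) as H2 by (intro E; rewrite E in H; lra).
    destruct (sumR_map_nz _ _ H2) as [w [Hw Hh]]. apply IHn in Hh.
    rewrite nbrs_cons in Hw. apply in_app_or in Hw. destruct Hw as [Hw|Hw].
    + unfold children in Hw. apply in_map_iff in Hw. destruct Hw as [j [<- _]].
      simpl length in Hh |- *. replace (S n + S (length p))%nat with (n + S (S (length p)))%nat by lia. exact Hh.
    + destruct Hw as [<-|[]]. simpl length.
      replace (S n + S (length p))%nat with (S (S (n + length p)))%nat by lia.
      rewrite Nat.even_succ_succ. exact Hh.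
Qed.


Definition fV (Rr k : nat) : R := 1 - INR k / INR (S Rr).

Definition Vf sp Rr u : R := if Nat.leb (sd sp u) Rr then fV Rr (sd sp u) else 0.

Lemma Vf_eq sp Rr u : (sd sp u <= S Rr)%nat -> Vf sp Rr u = fV Rr (sd sp u).
Proof.
  intros H. unfold Vf. destruct (Nat.leb_spec (sd sp u) Rr); auto.
  assert (sd sp u = S Rr) as -> by lia. unfold fV. field. apply not_0_INR. lia.
Qed.

Lemma sd_cons sp j u : sd sp (j :: u) =
  if andb (Nat.eqb (sd sp u) (length u)) (Nat.eqb j (sp (length u))) then S (length u) else sd sp u.
Proof. reflexivity. Qed.

Lemma sumR_ind a c n : (a < n)%nat ->
  sumR (map (fun j => if Nat.eqb j a then c else 0) (seq 0 n)) = c.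
Proof.
  induction n; intros H; [lia|]. rewrite seq_S, map_app, sumR_app. simpl.
  destruct (Nat.eqb_spec n a).
  - subst. replace (sumR (map (fun j => if Nat.eqb j a then c else 0) (seq 0 a))) with 0. lra.
    replace 0 with (sumR (map (fun _ : nat => 0) (seq 0 a))) at 1 by (rewrite sumR_map_const; lra).
    apply sumR_map_ext. intros w Hw. apply in_seq in Hw. destruct (Nat.eqb_spec w a); lia || lra.
  - rewrite IHn by lia. lra.
Qed.

Lemma children_sum ch (g : list nat -> R) u :
  sumR (map g (children ch u)) = sumR (map (fun j => g (j :: u)) (seq 0 (ch u))).
Proof. unfold children. rewrite map_map. reflexivity. Qed.

Lemma V_harm ch sp Rr i p : is_ray ch sp -> alive sp Rr (i :: p) = true ->
  avg ch (Vf sp Rr) (i :: p) = Vf sp Rr (i :: p).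
Proof.
  intros Hray A. remember (i :: p) as u eqn:Hu.
  assert (Hk : (sd sp u <= Rr)%nat) by (subst u; apply Nat.leb_le; exact A).
  rewrite avg_eq. subst u. rewrite nbrs_cons, map_app, sumR_app, children_sum, deg_cons.
  remember (i :: p) as u eqn:Hu. simpl sumR.
  pose proof (sd_le sp u) as Hle. pose proof (sd_le sp p) as Hlep.
  assert (Hsu := sd_cons sp i p). rewrite <- Hu in Hsu.
  destruct (Nat.eq_dec (sd sp u) (length u)) as [E|E].
  -
    set (k := sd sp u) in *.
    assert (HL : length u = S (length p)) by (subst u; reflexivity).
    assert (Hp : sd sp p = length p).
    { destruct (Nat.eqb_spec (sd sp p) (length p)); auto. simpl in Hsu. lia. }
    assert (Hray_u : u = ray sp k) by (rewrite E; apply sd_full; exact E).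
    assert (Hlt : (sp k < ch u)%nat) by (pose proof (Hray k) as Hr; rewrite <- Hray_u in Hr; exact Hr).
    rewrite (sumR_map_ext _ (fun j => fV Rr k + (if Nat.eqb j (sp k) then fV Rr (S k) - fV Rr k else 0))).
    2:{ intros j _. rewrite Vf_eq; rewrite sd_cons; fold k; rewrite E, Nat.eqb_refl; simpl andb; rewrite <- E.
        - destruct (Nat.eqb_spec j (sp k)); lra.
        - destruct (Nat.eqb j (sp k)); lia. }
    rewrite sumR_map_plus, sumR_map_const, length_seq, sumR_ind by exact Hlt.
    rewrite Vf_eq by lia. rewrite Vf_eq by lia. fold k. rewrite Hp.
    assert (k = S (length p)) as Hk2 by lia. rewrite Hk2. unfold fV. rewrite !S_INR.
    pose proof (pos_INR Rr). pose proof (pos_INR (ch u)). field. split; lra.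
  -
    set (k := sd sp u) in *.
    assert (Hp : sd sp p = k).
    { destruct (Nat.eqb_spec (sd sp p) (length p)); destruct (Nat.eqb_spec i (sp (length p))); simpl in Hsu;
      subst u; simpl in E; lia. }
    rewrite (sumR_map_ext _ (fun _ => fV Rr k)).
    2:{ intros j _. rewrite Vf_eq; rewrite sd_cons; fold k;
        destruct (Nat.eqb_spec k (length u)); try lia; simpl andb; fold k; [reflexivity|lia]. }
    rewrite sumR_map_const, length_seq. rewrite Vf_eq by lia. rewrite Hp. fold k.
    unfold Vf. change (sd sp u) with k. destruct (Nat.leb_spec k Rr); [|lia]. pose proof (pos_INR (ch u)). rewrite S_INR. field. lra.
Qed.


Definition Gf ch sp Rr n u := sumto (fun m => hK ch sp Rr m u) n.

Fixpoint Uf ch sp Rr n u : R :=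
  match n with O => Vf sp Rr u | S m => if alive sp Rr u then avg ch (Uf ch sp Rr m) u else 0 end.

Fixpoint Sv ch sp Rr n u : R :=
  match n with O => 1 | S m => if alive sp Rr u then avg ch (Sv ch sp Rr m) u else 0 end.

Lemma Uf_S ch sp Rr n u : Uf ch sp Rr (S n) u = if alive sp Rr u then avg ch (Uf ch sp Rr n) u else 0.
Proof. reflexivity. Qed.
Lemma Sv_S ch sp Rr n u : Sv ch sp Rr (S n) u = if alive sp Rr u then avg ch (Sv ch sp Rr n) u else 0.
Proof. reflexivity. Qed.

Definition Tf ch sp Rr n u := sumto (fun m => INR (S m) * hK ch sp Rr m u) n.

Lemma avg_ext ch f g u : (forall w, In w (nbrs ch u) -> f w = g w) -> avg ch f u = avg ch g u.
Proof. intros H. unfold avg. apply sumR_map_ext. intros w Hw. rewrite H; auto. Qed.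

Lemma Vf_nil sp Rr : Vf sp Rr [] = 1.
Proof. unfold Vf, fV. simpl. unfold Rdiv. rewrite Rmult_0_l. lra. Qed.

Lemma Vf_dead sp Rr i p : alive sp Rr (i :: p) = false -> Vf sp Rr (i :: p) = 0.
Proof. intros A. unfold Vf. unfold alive in A. rewrite A. reflexivity. Qed.

Lemma Vf_bounds sp Rr u : 0 <= Vf sp Rr u <= 1.
Proof.
  unfold Vf, fV. destruct (Nat.leb_spec (sd sp u) Rr); [|lra].
  assert (0 <= INR (sd sp u) / INR (S Rr) <= 1); [|lra].
  assert (0 < INR (S Rr)) by (apply lt_0_INR; lia).
  split. unfold Rdiv. apply Rmult_le_pos; [apply pos_INR|left; apply Rinv_0_lt_compat; lra].
  apply Rmult_le_reg_r with (INR (S Rr)); auto. unfold Rdiv. rewrite Rmult_assoc, Rinv_l by lra.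
  rewrite Rmult_1_r, Rmult_1_l. apply le_INR. lia.
Qed.

Lemma hK_nil_S ch sp Rr m : hK ch sp Rr (S m) [] = 0.
Proof. reflexivity. Qed.

Lemma hK_alive ch sp Rr m u : alive sp Rr u = true -> hK ch sp Rr (S m) u = avg ch (hK ch sp Rr m) u.
Proof. intros A. simpl. rewrite A. reflexivity. Qed.

Lemma hK_dead ch sp Rr m u : alive sp Rr u = false -> hK ch sp Rr (S m) u = 0.
Proof. intros A. simpl. rewrite A. reflexivity. Qed.

Lemma alive_nil sp Rr : alive sp Rr [] = false.
Proof. reflexivity. Qed.

Lemma G_S_alive ch sp Rr n i p : alive sp Rr (i :: p) = true ->
  Gf ch sp Rr (S n) (i :: p) = avg ch (Gf ch sp Rr n) (i :: p).
Proof.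
  intros A. unfold Gf. rewrite sumto_shift. simpl hK at 1.
  rewrite (sumto_ext _ (fun m => avg ch (hK ch sp Rr m) (i :: p))) by (intros; apply hK_alive; auto).
  rewrite sumto_avg. lra.
Qed.

Lemma G_S_nil ch sp Rr n : Gf ch sp Rr (S n) [] = 1.
Proof.
  unfold Gf. rewrite sumto_shift. simpl hK at 1.
  rewrite (sumto_ext _ (fun _ => 0)) by (intros; reflexivity). rewrite sumto_zero. lra.
Qed.

Lemma G_S_dead ch sp Rr n i p : alive sp Rr (i :: p) = false -> Gf ch sp Rr (S n) (i :: p) = 0.
Proof.
  intros A. unfold Gf. rewrite sumto_shift. simpl hK at 1.
  rewrite (sumto_ext _ (fun _ => 0)) by (intros; apply hK_dead; auto). rewrite sumto_zero. lra.
Qed.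

Lemma GU ch sp Rr n u : is_ray ch sp -> Gf ch sp Rr n u + Uf ch sp Rr n u = Vf sp Rr u.
Proof.
  intros Hray. revert u; induction n; intros u.
  - unfold Gf. simpl. lra.
  - destruct u as [|i p].
    + rewrite G_S_nil, Vf_nil. simpl. lra.
    + destruct (alive sp Rr (i :: p)) eqn:A.
      * rewrite G_S_alive by auto. rewrite Uf_S, A.
        rewrite <- avg_plus. rewrite (avg_ext _ _ (Vf sp Rr)) by (intros; apply IHn).
        apply V_harm; auto.
      * rewrite G_S_dead by auto. rewrite Uf_S, A, Vf_dead by auto. lra.
Qed.

Lemma Sv_nonneg ch sp Rr n u : 0 <= Sv ch sp Rr n u.
Proof.
  revert u; induction n; intros u; simpl; [lra|].
  destruct (alive sp Rr u) eqn:A; [|lra]. destruct u as [|i p]; [discriminate|].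
  rewrite <- (avg_const ch 0 i p). apply avg_le. auto.
Qed.

Lemma Uf_bounds ch sp Rr n u : 0 <= Uf ch sp Rr n u <= Sv ch sp Rr n u.
Proof.
  revert u; induction n; intros u; simpl; [pose proof (Vf_bounds sp Rr u); lra|].
  destruct (alive sp Rr u) eqn:A; [|lra]. destruct u as [|i p]; [discriminate|].
  split.
  - rewrite <- (avg_const ch 0 i p). apply avg_le. intros; apply IHn.
  - apply avg_le. intros; apply IHn.
Qed.

Lemma Sv_S_le ch sp Rr n u : Sv ch sp Rr (S n) u <= Sv ch sp Rr n u.
Proof.
  revert u; induction n; intros u.
  - simpl. destruct (alive sp Rr u) eqn:A; [|lra]. destruct u as [|i p]; [discriminate|].
    rewrite avg_const. lra.
  - rewrite (Sv_S ch sp Rr (S n)). destruct (alive sp Rr u) eqn:A.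
    + destruct u as [|i p]; [discriminate|]. rewrite Sv_S, A. apply avg_le. intros; apply IHn.
    + apply Sv_nonneg.
Qed.

Lemma Sv_anti ch sp Rr m n u : (m <= n)%nat -> Sv ch sp Rr n u <= Sv ch sp Rr m u.
Proof.
  induction 1; [lra|]. pose proof (Sv_S_le ch sp Rr m0 u). lra.
Qed.

Lemma G_le_1 ch sp Rr n u : is_ray ch sp -> Gf ch sp Rr n u <= 1.
Proof.
  intros H. pose proof (GU ch sp Rr n u H). pose proof (Uf_bounds ch sp Rr n u).
  pose proof (Vf_bounds sp Rr u). lra.
Qed.

Lemma sumto_plus f g n : sumto (fun m => f m + g m) n = sumto f n + sumto g n.
Proof. induction n; simpl; [lra|]. rewrite IHn. lra. Qed.

Lemma T_S_alive ch sp Rr n i p : alive sp Rr (i :: p) = true ->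
  Tf ch sp Rr (S n) (i :: p) = avg ch (fun w => Tf ch sp Rr n w + Gf ch sp Rr n w) (i :: p).
Proof.
  intros A. unfold Tf. rewrite sumto_shift. simpl hK at 1.
  rewrite (sumto_ext _ (fun m => avg ch (fun w => INR (S (S m)) * hK ch sp Rr m w) (i :: p))).
  2:{ intros m _. rewrite hK_alive by auto. rewrite avg_scal. reflexivity. }
  rewrite sumto_avg. rewrite Rmult_0_r, Rplus_0_l. apply avg_ext. intros w _.
  unfold Gf. rewrite <- sumto_plus. apply sumto_ext. intros m _. rewrite (S_INR (S m)). lra.
Qed.


Lemma T_bound ch sp Rr (Pv : list nat -> Prop) (W : list nat -> R) :
  is_ray ch sp ->
  (forall u w, Pv u -> In w (nbrs ch u) -> Pv w) ->
  (forall u, 0 <= W u) -> W [] = 0 ->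
  (forall i p, Pv (i :: p) -> alive sp Rr (i :: p) = true -> 1 + avg ch W (i :: p) <= W (i :: p)) ->
  forall n u, Pv u -> Tf ch sp Rr n u <= W u + 1.
Proof.
  intros Hray Hcl HW0 HWn HWs n. induction n; intros u Hu.
  - unfold Tf. simpl. pose proof (HW0 u). lra.
  - destruct u as [|i p].
    + unfold Tf. rewrite sumto_shift. simpl hK at 1.
      rewrite (sumto_ext _ (fun _ => 0)) by (intros; rewrite hK_nil_S; lra). rewrite sumto_zero, HWn. simpl. lra.
    + destruct (alive sp Rr (i :: p)) eqn:A.
      * rewrite T_S_alive by auto. pose proof (HWs i p Hu A).
        assert (avg ch (fun w => Tf ch sp Rr n w + Gf ch sp Rr n w) (i :: p) <= avg ch (fun w => W w + 2) (i :: p)).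
        { apply avg_le. intros w Hw. pose proof (IHn w (Hcl _ _ Hu Hw)). pose proof (G_le_1 ch sp Rr n w Hray). lra. }
        rewrite (avg_plus ch W (fun _ => 2)), avg_const in H0. lra.
      * unfold Tf. rewrite sumto_shift. simpl hK at 1.
        rewrite (sumto_ext _ (fun _ => 0)) by (intros; rewrite hK_dead by auto; lra). rewrite sumto_zero.
        pose proof (HW0 (i :: p)). lra.
Qed.

Lemma Sigma_bound ch sp Rr (Pv : list nat -> Prop) (W : list nat -> R) :
  (forall u w, Pv u -> In w (nbrs ch u) -> Pv w) ->
  (forall u, 0 <= W u) ->
  (forall i p, Pv (i :: p) -> alive sp Rr (i :: p) = true -> 1 + avg ch W (i :: p) <= W (i :: p)) ->
  forall n u, Pv u -> sumto (fun m => Sv ch sp Rr (S m) u) n <= W u.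
Proof.
  intros Hcl HW0 HWs n. induction n; intros u Hu.
  - simpl. apply HW0.
  - rewrite sumto_shift. destruct (alive sp Rr u) eqn:A.
    + destruct u as [|i p]; [discriminate|].
      assert (E : forall m, Sv ch sp Rr (S m) (i :: p) = avg ch (Sv ch sp Rr m) (i :: p))
        by (intros; rewrite Sv_S, A; reflexivity).
      rewrite E. simpl Sv at 1. rewrite avg_const.
      rewrite (sumto_ext _ (fun m => avg ch (Sv ch sp Rr (S m)) (i :: p))) by (intros; apply E).
      rewrite sumto_avg. pose proof (HWs i p Hu A).
      assert (avg ch (fun w => sumto (fun m => Sv ch sp Rr (S m) w) n) (i :: p) <= avg ch W (i :: p))
        by (apply avg_le; intros w Hw; apply IHn; eauto). lra.
    + rewrite Sv_S, A. rewrite (sumto_ext _ (fun _ => 0)) by (intros; rewrite Sv_S, A; reflexivity).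
      rewrite sumto_zero. pose proof (HW0 u). lra.
Qed.

Lemma Sv_small ch sp Rr (Pv : list nat -> Prop) (W : list nat -> R) :
  (forall u w, Pv u -> In w (nbrs ch u) -> Pv w) ->
  (forall u, 0 <= W u) ->
  (forall i p, Pv (i :: p) -> alive sp Rr (i :: p) = true -> 1 + avg ch W (i :: p) <= W (i :: p)) ->
  forall n u, Pv u -> INR n * Sv ch sp Rr n u <= W u.
Proof.
  intros Hcl HW0 HWs n u Hu. pose proof (Sigma_bound ch sp Rr Pv W Hcl HW0 HWs n u Hu).
  assert (INR n * Sv ch sp Rr n u <= sumto (fun m => Sv ch sp Rr (S m) u) n); [|lra].
  replace (INR n * Sv ch sp Rr n u) with (sumto (fun _ => Sv ch sp Rr n u) n).
  - apply sumto_le. intros m Hm. apply Sv_anti. lia.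
  - generalize (Sv ch sp Rr n u). intro c. clear. induction n; simpl; [lra|]. rewrite IHn. destruct n; simpl; lra.
Qed.


Definition valid ch u := In u (level ch (length u)).

Lemma valid_nbrs ch u w : valid ch u -> In w (nbrs ch u) -> valid ch w.
Proof.
  unfold valid. intros Hu Hw. unfold nbrs in Hw. apply in_app_or in Hw. destruct Hw as [Hw|Hw].
  - unfold children in Hw. apply in_map_iff in Hw. destruct Hw as [j [<- Hj]].
    simpl length. simpl level. apply in_flat_map. exists u. split; auto.
    unfold children. exact (in_map (fun i => i :: u) _ _ Hj).
  - destruct u as [|i p]; [destruct Hw|]. destruct Hw as [<-|[]].
    simpl length in Hu. simpl level in Hu. apply in_flat_map in Hu. destruct Hu as [v [Hv Hc]].
    unfold children in Hc. apply in_map_iff in Hc. destruct Hc as [j [E _]]. injection E as _ ->. auto.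
Qed.

Fixpoint lf ch u j : list (list nat) :=
  match j with O => [u] | S k => flat_map (children ch) (lf ch u k) end.

Lemma level_lf ch n : level ch n = lf ch [] n.
Proof. induction n; simpl; auto. rewrite IHn. reflexivity. Qed.

Lemma flat_map_flat_map {A B C} (f : A -> list B) (g : B -> list C) l :
  flat_map g (flat_map f l) = flat_map (fun a => flat_map g (f a)) l.
Proof. induction l; simpl; auto. rewrite flat_map_app, IHl. reflexivity. Qed.

Lemma lf_S ch u j : lf ch u (S j) = flat_map (fun c => lf ch c j) (children ch u).
Proof.
  induction j.
  - simpl. rewrite app_nil_r. induction (children ch u); simpl; auto. rewrite <- IHl. reflexivity.
  - change (lf ch u (S (S j))) with (flat_map (children ch) (lf ch u (S j))). rewrite IHj.
    rewrite flat_map_flat_map. reflexivity.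
Qed.

Lemma lf_level ch u j w : valid ch u -> In w (lf ch u j) -> In w (level ch (length u + j)).
Proof.
  intros Hu. revert w. induction j; intros w Hw.
  - destruct Hw as [<-|[]]. rewrite Nat.add_0_r. exact Hu.
  - simpl in Hw. apply in_flat_map in Hw. destruct Hw as [v [Hv Hc]].
    replace (length u + S j)%nat with (S (length u + j)) by lia. simpl. apply in_flat_map. eauto.
Qed.

Lemma lf_sd ch sp u j w : In w (lf ch u j) -> (sd sp u <= sd sp w)%nat.
Proof.
  revert w. induction j; intros w Hw.
  - destruct Hw as [<-|[]]. lia.
  - simpl in Hw. apply in_flat_map in Hw. destruct Hw as [v [Hv Hc]].
    unfold children in Hc. apply in_map_iff in Hc. destruct Hc as [i [<- _]].
    pose proof (sd_mono sp i v). pose proof (IHj v Hv). lia.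
Qed.

Definition hb sp Rr w := Nat.leb (sd sp w) Rr.
Definition cnt ch sp Rr u j := length (filter (hb sp Rr) (lf ch u j)).

Lemma filter_flat_map_len {A B} (P : B -> bool) (f : A -> list B) l :
  length (filter P (flat_map f l)) = list_sum (map (fun c => length (filter P (f c))) l).
Proof. induction l; simpl; auto. rewrite filter_app, length_app, IHl. reflexivity. Qed.

Lemma cnt_S ch sp Rr u j : cnt ch sp Rr u (S j) = list_sum (map (fun c => cnt ch sp Rr c j) (children ch u)).
Proof. unfold cnt. rewrite lf_S, filter_flat_map_len. reflexivity. Qed.

Lemma filter_none {A} (P : A -> bool) l : (forall x, In x l -> P x = false) -> filter P l = [].
Proof. induction l; simpl; intros H; auto. rewrite H by auto. apply IHl. auto. Qed.

Lemma filter_len0 {A} (P : A -> bool) l x : length (filter P l) = 0%nat -> In x l -> P x = false.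
Proof.
  intros H Hx. destruct (P x) eqn:E; auto.
  assert (In x (filter P l)) by (apply filter_In; auto). destruct (filter P l); [destruct H0|discriminate].
Qed.

Lemma cnt_nonhull ch sp Rr u j : hb sp Rr u = false -> cnt ch sp Rr u j = 0%nat.
Proof.
  intros H. unfold cnt. rewrite filter_none; auto. intros w Hw. pose proof (lf_sd ch sp u j w Hw).
  unfold hb in *. apply Nat.leb_gt in H. apply Nat.leb_gt. lia.
Qed.

Fixpoint Dn ch sp Rr u k : nat :=
  match k with O => cnt ch sp Rr u 0 | S e => (Dn ch sp Rr u e + cnt ch sp Rr u (S e))%nat end.

Lemma hvu_Dn ch sp Rr d : hull_vertices_upto ch sp Rr d = Dn ch sp Rr [] d.
Proof.
  assert (Hf : forall l, filter (in_hull sp Rr) l = filter (hb sp Rr) l)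
    by (intros; apply filter_ext; intros; unfold hb; apply in_hull_sd).
  induction d.
  - unfold hull_vertices_upto, Dn, cnt. rewrite Hf, level_lf. reflexivity.
  - change (hull_vertices_upto ch sp Rr (S d)) with
      (hull_vertices_upto ch sp Rr d + length (filter (in_hull sp Rr) (level ch (S d))))%nat.
    rewrite IHd, Hf, level_lf. reflexivity.
Qed.

Lemma list_sum_map_add {A} (f g : A -> nat) l :
  list_sum (map (fun c => f c + g c)%nat l) = (list_sum (map f l) + list_sum (map g l))%nat.
Proof. induction l; simpl; auto. rewrite IHl. lia. Qed.

Lemma Dn_rec ch sp Rr u k :
  Dn ch sp Rr u (S k) = (cnt ch sp Rr u 0 + list_sum (map (fun c => Dn ch sp Rr c k) (children ch u)))%nat.
Proof.
  induction k.
  - simpl Dn. rewrite cnt_S. reflexivity.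
  - change (Dn ch sp Rr u (S (S k))) with (Dn ch sp Rr u (S k) + cnt ch sp Rr u (S (S k)))%nat.
    rewrite IHk, cnt_S. simpl Dn. rewrite list_sum_map_add. lia.
Qed.

Lemma Dn_nonhull ch sp Rr u k : hb sp Rr u = false -> Dn ch sp Rr u k = 0%nat.
Proof. intros H. induction k; simpl; rewrite ?IHk; apply cnt_nonhull; auto. Qed.

Lemma Dn_ge1 ch sp Rr u k : hb sp Rr u = true -> (1 <= Dn ch sp Rr u k)%nat.
Proof.
  intros H. induction k; simpl; [|lia]. unfold cnt. simpl. rewrite H. simpl. lia.
Qed.

Lemma INR_list_sum {A} (f : A -> nat) l : INR (list_sum (map f l)) = sumR (map (fun c => INR (f c)) l).
Proof. induction l; simpl; auto. rewrite plus_INR, IHl. reflexivity. Qed.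


Definition depth_bound ch sp Rr d0 := forall w n, (d0 < n)%nat -> In w (level ch n) -> hb sp Rr w = false.

Lemma depth_bound_of ch sp Rr N : hull_edges_eq ch sp Rr N -> exists d0, depth_bound ch sp Rr d0.
Proof.
  intros [d0 H]. exists d0. intros w n Hn Hw. destruct n as [|d]; [lia|].
  pose proof (H d ltac:(lia)). pose proof (H (S d) ltac:(lia)). rewrite !hvu_Dn in *.
  simpl Dn in H1. assert (cnt ch sp Rr [] (S d) = 0%nat) by lia. unfold cnt in H2.
  rewrite <- level_lf in H2. eapply filter_len0; eauto.
Qed.

Lemma cnt_deep ch sp Rr d0 u j : depth_bound ch sp Rr d0 -> valid ch u -> (d0 < length u + j)%nat ->
  cnt ch sp Rr u j = 0%nat.
Proof.
  intros Hd Hu Hj. unfold cnt. rewrite filter_none; auto. intros w Hw.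
  eapply Hd; [exact Hj|]. eapply lf_level; eauto.
Qed.

Definition Dr ch sp Rr d0 u : R := INR (Dn ch sp Rr u (S d0)).

Lemma Dr_rec ch sp Rr d0 u : depth_bound ch sp Rr d0 -> valid ch u ->
  Dr ch sp Rr d0 u = (if hb sp Rr u then 1 else 0) + sumR (map (Dr ch sp Rr d0) (children ch u)).
Proof.
  intros Hd Hu. unfold Dr. rewrite Dn_rec, plus_INR, INR_list_sum. f_equal.
  - unfold cnt. simpl. destruct (hb sp Rr u); reflexivity.
  - apply sumR_map_ext. intros c Hc. f_equal.
    assert (valid ch c) by (eapply valid_nbrs; eauto; unfold nbrs; apply in_or_app; auto).
    simpl Dn. rewrite (cnt_deep ch sp Rr d0 c (S d0)); auto; lia.
Qed.

Fixpoint Wf ch sp Rr d0 u : R :=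
  match u with
  | [] => 0
  | i :: p => if hb sp Rr (i :: p) then Wf ch sp Rr d0 p + 2 * Dr ch sp Rr d0 (i :: p) - 1 else 0
  end.

Lemma Wf_cons ch sp Rr d0 i p : Wf ch sp Rr d0 (i :: p) =
  if hb sp Rr (i :: p) then Wf ch sp Rr d0 p + 2 * Dr ch sp Rr d0 (i :: p) - 1 else 0.
Proof. reflexivity. Qed.

Lemma Dr_ge1 ch sp Rr d0 u : hb sp Rr u = true -> 1 <= Dr ch sp Rr d0 u.
Proof. intros H. unfold Dr. apply (le_INR 1). apply Dn_ge1; auto. Qed.

Lemma Wf_nonneg ch sp Rr d0 u : 0 <= Wf ch sp Rr d0 u.
Proof.
  induction u as [|i p IH]; simpl; [lra|]. destruct (hb sp Rr (i :: p)) eqn:H; [|lra].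
  pose proof (Dr_ge1 ch sp Rr d0 _ H). lra.
Qed.

Lemma Wf_ge1 ch sp Rr d0 i p : hb sp Rr (i :: p) = true -> 1 <= Wf ch sp Rr d0 (i :: p).
Proof.
  intros H. rewrite Wf_cons, H. pose proof (Dr_ge1 ch sp Rr d0 _ H). pose proof (Wf_nonneg ch sp Rr d0 p). lra.
Qed.

Lemma W_super ch sp Rr d0 i p : depth_bound ch sp Rr d0 -> valid ch (i :: p) -> alive sp Rr (i :: p) = true ->
  1 + avg ch (Wf ch sp Rr d0) (i :: p) <= Wf ch sp Rr d0 (i :: p).
Proof.
  intros Hd Hv A. assert (Hh : hb sp Rr (i :: p) = true) by exact A.
  remember (i :: p) as u eqn:Hu.
  set (Wu := Wf ch sp Rr d0 u).
  assert (HWu : Wu = Wf ch sp Rr d0 p + 2 * Dr ch sp Rr d0 u - 1) by (unfold Wu; subst u; rewrite Wf_cons, Hh; reflexivity).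
  assert (HW1 : 1 <= Wu) by (unfold Wu; subst u; apply Wf_ge1; auto).
  assert (HD := Dr_rec ch sp Rr d0 u Hd Hv). rewrite Hh in HD.
  assert (Hch : sumR (map (Wf ch sp Rr d0) (children ch u)) <=
                sumR (map (fun c => (Wu - 1) + 2 * Dr ch sp Rr d0 c) (children ch u))).
  { apply sumR_map_le. intros c Hc. unfold children in Hc. apply in_map_iff in Hc. destruct Hc as [j [<- _]].
    rewrite Wf_cons. fold Wu. destruct (hb sp Rr (j :: u)) eqn:Hc; [lra|].
    unfold Dr. rewrite Dn_nonhull by auto. simpl. lra. }
  rewrite sumR_map_plus, sumR_map_scal, sumR_map_const in Hch.
  rewrite avg_eq. subst u. rewrite nbrs_cons, map_app, sumR_app, deg_cons. simpl sumR.
  unfold children in Hch at 2. rewrite length_map, length_seq in Hch.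
  rewrite S_INR. pose proof (pos_INR (ch (i :: p))).
  apply Rmult_le_reg_r with (INR (ch (i :: p)) + 1); [lra|].
  unfold Rdiv. rewrite Rmult_plus_distr_r, Rmult_assoc, Rinv_l by lra. nra.
Qed.


Lemma hitsum_le1 ch n u : sumto (fun m => hit ch m u) n <= 1.
Proof.
  revert u; induction n; intros u; [simpl; lra|].
  rewrite sumto_shift. destruct u as [|i p].
  - simpl hit at 1. rewrite (sumto_ext _ (fun _ => 0)) by (intros; reflexivity). rewrite sumto_zero. lra.
  - simpl hit at 1.
    rewrite (sumto_ext _ (fun m => avg ch (hit ch m) (i :: p))) by (intros; reflexivity).
    rewrite sumto_avg. rewrite <- (avg_const ch 1 i p). assert (0 = 0) by lra.
    pose proof (avg_le ch (fun w => sumto (fun m => hit ch m w) n) (fun _ => 1) i p ltac:(intros; apply IHn)).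
    lra.
Qed.

Lemma first_return_S ch m : ch [] = 1%nat -> first_return ch (S m) = hit ch m [0%nat].
Proof.
  intros H. unfold first_return, nbrs, children, deg. rewrite H. simpl. field.
Qed.

Lemma fr_nonneg ch t : ch [] = 1%nat -> 0 <= first_return ch t.
Proof. intros H. destruct t; [simpl; lra|]. rewrite first_return_S; auto. apply hit_nonneg. Qed.

Lemma bernoulli x k : 0 <= x <= 1 -> 1 - INR k * x <= (1 - x) ^ k.
Proof.
  intros Hx. induction k; [simpl; lra|]. rewrite S_INR. simpl pow.
  assert ((1 - INR k * x) * (1 - x) <= (1 - x) ^ k * (1 - x)) by (apply Rmult_le_compat_r; lra).
  pose proof (pos_INR k). nra.
Qed.

Lemma pow_le1 q n : 0 <= q <= 1 -> q ^ n <= 1.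
Proof. intros H. induction n; simpl; [lra|]. pose proof (pow_le q n ltac:(lra)). nra. Qed.

Lemma sumto_scal c f n : sumto (fun m => c * f m) n = c * sumto f n.
Proof. induction n; simpl; [lra|]. rewrite IHn. lra. Qed.

Theorem lemma3 (ch : Tree) (sp : nat -> nat) (Rr : nat) (x : R) (N : nat) :
  spine_of ch sp ->
  (1 <= Rr)%nat ->
  0 < x <= 1 ->
  hull_edges_eq ch sp Rr N ->
  exists P : R, infinite_sum (P_term ch x) P /\
    1 - 1 / INR Rr - x * INR N <= P.
Proof.
  intros [Hroot [Hray _]] HR Hx Hhull.
  assert (Hch : ch [] = 1%nat) by (unfold root_deg_one, deg in Hroot; lia).
  assert (Hsp0 : sp 0%nat = 0%nat) by (pose proof (Hray 0%nat); simpl in H; lia).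
  set (q := sqrt (1 - x)).
  assert (Hq0 : 0 <= q) by apply sqrt_pos.
  assert (Hq1 : q <= 1).
  { unfold q. assert (sqrt (1 - x) <= sqrt 1) by (apply sqrt_le_1_alt; lra). rewrite sqrt_1 in H. exact H. }
  assert (Hterm : forall t, 0 <= P_term ch x t).
  { intros t. unfold P_term. apply Rmult_le_pos; [apply fr_nonneg; auto|apply pow_le; auto]. }
  assert (Hgrow : Un_growing (sum_f_R0 (P_term ch x))).
  { intros n. simpl. pose proof (Hterm (S n)). lra. }
  assert (Hps : forall n, sum_f_R0 (P_term ch x) n = sumto (fun m => hit ch m [0%nat] * q ^ (S m)) n).
  { intros n. rewrite sum_f_R0_sumto, sumto_shift. unfold P_term at 1. simpl first_return. rewrite Rmult_0_l, Rplus_0_l.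
    apply sumto_ext. intros m _. unfold P_term. rewrite first_return_S; auto. }
  assert (Hub : has_ub (sum_f_R0 (P_term ch x))).
  { exists 1. intros y [n ->]. rewrite Hps. eapply Rle_trans; [|apply (hitsum_le1 ch n [0%nat])].
    apply sumto_le. intros m _. pose proof (hit_nonneg ch m [0%nat]).
    assert (q ^ S m <= 1) by (apply pow_le1; auto). nra. }
  destruct (growing_cv _ Hgrow Hub) as [P HP].
  exists P. split; [exact HP|].
  destruct (depth_bound_of ch sp Rr N Hhull) as [d0 Hd].
  set (W := Wf ch sp Rr d0).
  assert (Hcl : forall u w, valid ch u -> In w (nbrs ch u) -> valid ch w) by apply valid_nbrs.
  assert (HW0 : forall u, 0 <= W u) by (intros; apply Wf_nonneg).
  assert (HWs : forall i p, valid ch (i :: p) -> alive sp Rr (i :: p) = true -> 1 + avg ch W (i :: p) <= W (i :: p))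
    by (intros; apply W_super; auto).
  assert (Hv0 : valid ch [0%nat]).
  { unfold valid. simpl. unfold children. rewrite Hch. simpl. auto. }
  assert (Hsd0 : sd sp [0%nat] = 1%nat) by (simpl; rewrite Hsp0; reflexivity).
  assert (Hhb0 : hb sp Rr [0%nat] = true) by (unfold hb; rewrite Hsd0; apply Nat.leb_le; lia).
  assert (HWs1 : W [0%nat] = 2 * INR N - 1).
  { unfold W. rewrite Wf_cons, Hhb0. simpl Wf.
    assert (Hvn : valid ch []) by (unfold valid; simpl; auto).
    pose proof (Dr_rec ch sp Rr d0 [] Hd Hvn) as HD.
    unfold children in HD. rewrite Hch in HD. simpl in HD.
    assert (hb sp Rr [] = true) by reflexivity. idtac.
    assert (Dr ch sp Rr d0 [] = INR (S N)).
    { unfold Dr. destruct Hhull as [d1 Hd1]. f_equal.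
      assert (forall k, (d0 <= k)%nat -> Dn ch sp Rr [] k = Dn ch sp Rr [] d0).
      { intros k Hk. induction Hk; auto. simpl. rewrite IHHk.
        rewrite (cnt_deep ch sp Rr d0 [] (S m)); auto. lia. }
      rewrite H0 by lia. rewrite <- (H0 (max d0 d1)) by lia. rewrite <- hvu_Dn. apply Hd1. lia. }
    rewrite S_INR in H0. lra. }
  set (n0 := S (2 * N * Rr * S Rr)).
  pose proof (Sv_small ch sp Rr (valid ch) W Hcl HW0 HWs n0 [0%nat] Hv0) as HSv.
  pose proof (T_bound ch sp Rr (valid ch) W Hray Hcl HW0 ltac:(reflexivity) HWs n0 [0%nat] Hv0) as HT.
  pose proof (GU ch sp Rr n0 [0%nat] Hray) as HGU.
  pose proof (Uf_bounds ch sp Rr n0 [0%nat]) as HU.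
  assert (HV : Vf sp Rr [0%nat] = 1 - 1 / INR (S Rr)).
  { unfold Vf. rewrite Hsd0. destruct (Nat.leb_spec 1 Rr); [|lia]. unfold fV. simpl INR at 1. lra. }
  assert (Hlow : Gf ch sp Rr n0 [0%nat] - x / 2 * Tf ch sp Rr n0 [0%nat] <= sum_f_R0 (P_term ch x) n0).
  { rewrite Hps.
    replace (Gf ch sp Rr n0 [0%nat] - x / 2 * Tf ch sp Rr n0 [0%nat]) with
      (sumto (fun m => hK ch sp Rr m [0%nat] + (-(x/2)) * (INR (S m) * hK ch sp Rr m [0%nat])) n0)
      by (rewrite sumto_plus, sumto_scal; unfold Gf, Tf; lra).
    apply sumto_le. intros m _.
    pose proof (hK_nonneg ch sp Rr m [0%nat]). pose proof (hK_le_hit ch sp Rr m [0%nat]).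
    assert (0 <= q ^ S m) by (apply pow_le; auto).
    destruct (Req_dec (hK ch sp Rr m [0%nat]) 0) as [E|E].
    - rewrite E. pose proof (hit_nonneg ch m [0%nat]). nra.
    - apply hK_parity in E. simpl length in E. rewrite Nat.add_1_r in E.
      apply Nat.even_spec in E. destruct E as [k Hk]. rewrite Hk.
      assert (q ^ (2 * k) = (1 - x) ^ k).
      { rewrite pow_mult. f_equal. simpl. rewrite Rmult_1_r. unfold q. apply sqrt_sqrt. lra. }
      rewrite H2. pose proof (bernoulli x k ltac:(lra)).
      assert (INR (2 * k) = 2 * INR k) by (rewrite mult_INR; simpl; lra). rewrite H4.
      assert (hK ch sp Rr m [0%nat] * (1 - INR k * x) <= hit ch m [0%nat] * (1 - x) ^ k).
      { apply Rle_trans with (hK ch sp Rr m [0%nat] * (1 - x) ^ k).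
        - apply Rmult_le_compat_l; auto.
        - apply Rmult_le_compat_r; auto. apply pow_le. lra. }
      nra. }
  pose proof (growing_ineq _ _ Hgrow HP n0) as HPn.
  assert (HRr : 1 <= INR Rr) by (apply (le_INR 1); lia).
  assert (Hn0 : INR n0 = 2 * INR N * INR Rr * (INR Rr + 1) + 1).
  { unfold n0. rewrite S_INR, !mult_INR, (S_INR Rr). replace (INR 2) with 2 by (simpl; lra). lra. }
  assert (HN : 0 <= INR N) by apply pos_INR.
  set (S0 := Sv ch sp Rr n0 [0%nat]) in *.
  assert (HS0 : 0 <= S0) by apply Sv_nonneg.
  assert (HSb : S0 * (INR Rr * (INR Rr + 1)) <= 1).
  { set (M := INR Rr * (INR Rr + 1)) in *.
    assert (HM : 0 <= M) by (unfold M; nra).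
    rewrite HWs1, Hn0 in HSv.
    assert ((2 * INR N * M + 1) * S0 <= 2 * INR N) by (unfold M in *; nra).
    assert ((2 * INR N * M + 1) * (S0 * M) <= 2 * INR N * M) by nra.
    assert (HA : 0 <= 2 * INR N * M) by nra. destruct (Rle_lt_dec (S0 * M) 1) as [Hl|Hl]; auto. assert ((2 * INR N * M + 1) * 1 < (2 * INR N * M + 1) * (S0 * M)) by (apply Rmult_lt_compat_l; lra). lra. }
  assert (Hfrac : 1 / INR Rr - 1 / INR (S Rr) = 1 / (INR Rr * (INR Rr + 1))).
  { rewrite S_INR. field. lra. }
  assert (S0 <= 1 / INR Rr - 1 / INR (S Rr)).
  { rewrite Hfrac. apply Rmult_le_reg_r with (INR Rr * (INR Rr + 1)); [nra|].
    unfold Rdiv. rewrite Rmult_1_l, Rinv_l by nra. exact HSb. }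
  rewrite HWs1 in HT. nra.
Qed.
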